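(* Let $w\in F_2$ be a word in $x,y$ whose trace map $\psi_w$ is Big, and define words recursively by $v_1(x,y)=w(x,y)$, $v_{n+1}(x,y)=w(v_n(x,y),y)$. Then for every $n\ge 1$ the word map $v_n:\mathrm{SL}(2,\mathbb{C})^2\to\mathrm{SL}(2,\mathbb{C})$ is almost surjective, i.e. its image contains $\mathrm{SL}(2,\mathbb{C})\setminus\{-\mathrm{id}\}$.
   Context: For a word $w(x,y)$ there are polynomials $P_w(s,t,u)$, $Q_w(s,t,u)$ such that for all $x,y\in\mathrm{SL}(2,\mathbb{C})$: $\mathrm{tr}(w(x,y))=P_w(\mathrm{tr}\,x,\mathrm{tr}\,y,\mathrm{tr}\,xy)$ and $\mathrm{tr}(w(x,y)y)=Q_w(\mathrm{tr}\,x,\mathrm{tr}\,y,\mathrm{tr}\,xy)$. The trace map is $\psi_w(s,t,u)=(P_w(s,t,u),t,Q_w(s,t,u))$. For $a\in\mathbb{C}$, $\psi_a(s,u)=(P_w(s,a,u),Q_w(s,a,u))$ is Big if $\psi_a(\mathbb{C}^2)=\mathbb{C}^2\setminus T_a$ with $T_a$ finite; $\psi_w$ is Big if some $\psi_a$ is Big. *)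

(* Defs.v *)
From mathcomp Require Import all_boot all_order all_algebra.
From mathcomp Require Import complex.
From mathcomp Require Import reals.
Set Implicit Arguments. Unset Strict Implicit. Unset Printing Implicit Defensive.
Import Order.TTheory GRing.Theory Num.Theory.
Local Open Scope ring_scope.

(* Words in the free group F_2 = <x, y>, as group terms.  Any term denotes an
   element of F_2 and its word map only depends on that element. *)
Inductive word : Type :=
  | WX | WY | WOne | WMul of word & word | WInv of word.

Fixpoint subst_x (w u : word) : word :=
  match w with
  | WX => u
  | WY => WY
  | WOne => WOne
  | WMul a b => WMul (subst_x a u) (subst_x b u)
  | WInv a => WInv (subst_x a u)
  end.

(* v_n with v_0 = x, v_1 = w, v_{n+1} = w(v_n, y). *)
Definition iter_word (w : word) (n : nat) : word := iter n (fun v => subst_x w v) WX.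

Section Eval.
Variable C : comUnitRingType.

Fixpoint word_eval (w : word) (x y : 'M[C]_2) : 'M[C]_2 :=
  match w with
  | WX => x
  | WY => y
  | WOne => 1%:M
  | WMul a b => word_eval a x y *m word_eval b x y
  | WInv a => invmx (word_eval a x y)
  end.

Definition inSL2 (g : 'M[C]_2) : Prop := \det g = 1.

(* evaluation of a 3-variable polynomial P(s,t,u) represented as a nested
   univariate polynomial (outer variable s, then t, then u) *)
Definition eval3 (P : {poly {poly {poly C}}}) (s t u : C) : C :=
  (P.[(s%:P)%:P]).[t%:P].[u].

Definition trace_polys (w : word) (P Q : {poly {poly {poly C}}}) : Prop :=
  forall x y : 'M[C]_2, inSL2 x -> inSL2 y ->
    \tr (word_eval w x y) = eval3 P (\tr x) (\tr y) (\tr (x *m y)) /\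
    \tr (word_eval w x y *m y) = eval3 Q (\tr x) (\tr y) (\tr (x *m y)).
End Eval.

Section Big.
Variable C : fieldType.
Definition big_at (P Q : {poly {poly {poly C}}}) (a : C) : Prop :=
  exists T : seq (C * C), forall p : C * C,
    (exists s u : C, (eval3 P s a u, eval3 Q s a u) = p) <-> p \notin T.

Definition trace_map_big (w : word) : Prop :=
  exists P Q : {poly {poly {poly C}}},
    trace_polys w P Q /\ exists a : C, big_at P Q a.
End Big.

(* Main.v *)
Require Import Defs.
From Stdlib Require Classical_Prop.
From mathcomp Require Import all_boot all_order all_algebra.
From mathcomp Require Import complex.
From mathcomp Require Import reals.
From mathcomp Require Import ring.
Import Order.TTheory GRing.Theory Num.Theory.
Local Open Scope ring_scope.
Local Open Scope complex_scope.
Set Implicit Arguments. Unset Strict Implicit.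
Section M2.
Variable C : comNzRingType.
Implicit Types A B : 'M[C]_2.
Lemma mul2E A B i j : (A *m B) i j = A i 0 * B 0 j + A i 1 * B 1 j.
Proof.
rewrite mxE big_ord_recr big_ord_recr big_ord0 /=.
have -> : widen_ord (m:=2) (leqnSn 1) ord_max = 0 by apply: val_inj.
have -> : (ord_max : 'I_2) = 1 by apply: val_inj.
by rewrite add0r.
Qed.
Lemma tr2E A : \tr A = A 0 0 + A 1 1.
Proof.
rewrite /mxtrace big_ord_recr big_ord_recr big_ord0 /=.
have -> : widen_ord (m:=2) (leqnSn 1) ord_max = 0 by apply: val_inj.
have -> : (ord_max : 'I_2) = 1 by apply: val_inj.
by rewrite add0r.
Qed.
Lemma eq2 A B : A 0 0 = B 0 0 -> A 0 1 = B 0 1 -> A 1 0 = B 1 0 -> A 1 1 = B 1 1 -> A = B.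
Proof.
move=> h00 h01 h10 h11; apply/matrixP => i j.
have [->|->] : i = 0 \/ i = 1.
  by case: i => [[|[|//]] Hi]; [left|right]; apply: val_inj.
all: have [->|->] : j = 0 \/ j = 1 by case: j => [[|[|//]] Hj]; [left|right]; apply: val_inj.
all: by [].
Qed.
Lemma det2E A : \det A = A 0 0 * A 1 1 - A 0 1 * A 1 0.
Proof.
rewrite (expand_det_row _ 0) big_ord_recr big_ord_recr big_ord0 /=.
have -> : widen_ord (m:=2) (leqnSn 1) ord_max = 0 by apply: val_inj.
have -> : (ord_max : 'I_2) = 1 by apply: val_inj.
rewrite add0r /cofactor !det_mx11 !mxE /=.
have -> : lift (0:'I_2) (0:'I_1) = 1 by apply: val_inj.
have -> : lift (1:'I_2) (0:'I_1) = 0 by apply: val_inj.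
by rewrite /= expr0 mul1r expr1 mulN1r mulrN.
Qed.
Definition mk2 (a b c d : C) : 'M[C]_2 :=
  \matrix_(i < 2, j < 2) if (i : nat) == 0%N then (if (j : nat) == 0%N then a else b)
                         else (if (j : nat) == 0%N then c else d).
Lemma mk2_00 a b c d : mk2 a b c d 0 0 = a. Proof. by rewrite mxE. Qed.
Lemma mk2_01 a b c d : mk2 a b c d 0 1 = b. Proof. by rewrite mxE. Qed.
Lemma mk2_10 a b c d : mk2 a b c d 1 0 = c. Proof. by rewrite mxE. Qed.
Lemma mk2_11 a b c d : mk2 a b c d 1 1 = d. Proof. by rewrite mxE. Qed.
Definition mk2E := (mk2_00, mk2_01, mk2_10, mk2_11).
Lemma scal2E (a : C) : (a%:M : 'M[C]_2) = mk2 a 0 0 a.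
Proof. by apply: eq2; rewrite !mxE. Qed.
End M2.

Section W.
Variable C : comUnitRingType.
Lemma subst_eval (w u : word) (x y : 'M[C]_2) :
  word_eval (subst_x w u) x y = word_eval w (word_eval u x y) y.
Proof. by elim: w => //= [a -> b ->|a ->]. Qed.

Lemma SL2_unit (x : 'M[C]_2) : inSL2 x -> x \in unitmx.
Proof. by rewrite /inSL2 unitmxE => ->; rewrite unitr1. Qed.

Lemma eval_SL2 (u : word) (x y : 'M[C]_2) : inSL2 x -> inSL2 y -> inSL2 (word_eval u x y).
Proof.
rewrite /inSL2 => hx hy; elim: u => //= [|a ha b hb|a ha].
- by rewrite det1.
- by rewrite det_mulmx ha hb mulr1.
- by rewrite det_inv ha invr1.
Qed.

Lemma eval_one (u : word) : word_eval u (1%:M : 'M[C]_2) 1%:M = 1%:M.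
Proof. by elim: u => //= [a -> b ->|a ->]; rewrite ?mulmx1 ?invmx1. Qed.

Lemma invmx_conj (h M : 'M[C]_2) : h \in unitmx -> M \in unitmx ->
  invmx (h *m M *m invmx h) = h *m invmx M *m invmx h.
Proof.
move=> hu Mu.
have Nu : h *m M *m invmx h \in unitmx by rewrite !unitmx_mul hu Mu unitmx_inv hu.
have E : (h *m M *m invmx h) *m (h *m invmx M *m invmx h) = 1%:M.
  rewrite !mulmxA mulmxKV // -(mulmxA h) mulmxV // mulmx1 mulmxV //.
by rewrite -[invmx (h *m M *m invmx h)]mulmx1 -E mulKmx.
Qed.

Lemma eval_conj (u : word) (h x y : 'M[C]_2) : h \in unitmx -> inSL2 x -> inSL2 y ->
  word_eval u (h *m x *m invmx h) (h *m y *m invmx h) = h *m word_eval u x y *m invmx h.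
Proof.
move=> hu hx hy; elim: u => //= [|a ha b hb|a ha].
- by rewrite mulmx1 mulmxV.
- by rewrite ha hb !mulmxA mulmxKV.
- by rewrite ha invmx_conj // SL2_unit //; apply: eval_SL2.
Qed.
End W.

Section Conj.
Variable C : fieldType.
Implicit Types A B : 'M[C]_2.
Definition comp A := mk2 0 (- \det A) 1 (\tr A).
Definition Pm A (e1 e2 : C) := mk2 e1 (A 0 0 * e1 + A 0 1 * e2) e2 (A 1 0 * e1 + A 1 1 * e2).
Lemma Pm_comp A e1 e2 : A *m Pm A e1 e2 = Pm A e1 e2 *m comp A.
Proof.
apply: eq2; rewrite /comp /Pm !mul2E !mk2E; rewrite ?det2E ?tr2E; ring.
Qed.
Definition nonscalar A := A 0 1 != 0 \/ A 1 0 != 0 \/ A 0 0 != A 1 1.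
Lemma Pm_unit A : nonscalar A -> exists e1 e2, Pm A e1 e2 \in unitmx.
Proof.
move=> ns; setoid_rewrite unitmxE; setoid_rewrite unitfE; setoid_rewrite det2E.
setoid_rewrite mk2_00; setoid_rewrite mk2_01; setoid_rewrite mk2_10; setoid_rewrite mk2_11.
have [h10|h10] := eqVneq (A 1 0) 0; last first.
  by exists 1, 0; rewrite !(mulr1, mulr0, addr0, mul0r, subr0, mul1r).
have [h01|h01] := eqVneq (A 0 1) 0; last first.
  exists 0, 1; rewrite !(mulr1, mulr0, addr0, mul0r, subr0, mul1r, add0r, sub0r).
  by rewrite oppr_eq0.
exists 1, 1; rewrite h10 h01 !(mulr1, mulr0, addr0, mul0r, subr0, mul1r, add0r, sub0r).
rewrite subr_eq0 eq_sym; case: ns => [|[]]; by rewrite ?h10 ?h01 ?eqxx.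
Qed.
Lemma conj_exists A B : nonscalar A -> nonscalar B -> \tr A = \tr B -> \det A = \det B ->
  exists h, h \in unitmx /\ h *m A *m invmx h = B.
Proof.
move=> nA nB ht hd.
have [e1 [e2 PA]] := Pm_unit nA.
have [f1 [f2 PB]] := Pm_unit nB.
set P := Pm A e1 e2 in PA *; set Q := Pm B f1 f2 in PB *.
have cAB : comp A = comp B by rewrite /comp ht hd.
have EA : A = P *m comp A *m invmx P by rewrite -Pm_comp mulmxK.
have EB : Q *m comp A *m invmx Q = B by rewrite cAB -Pm_comp mulmxK.
exists (Q *m invmx P); split; first by rewrite unitmx_mul PB unitmx_inv.
have EA' : invmx P *m A = comp A *m invmx P.
  by rewrite {1}EA !mulmxA mulVmx // mul1mx.
have EB' : B *m Q = Q *m comp A by rewrite cAB Pm_comp.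
have hA : Q *m invmx P *m A = B *m (Q *m invmx P).
  by rewrite -mulmxA EA' mulmxA -EB' mulmxA.
by rewrite hA -mulmxA mulmxV ?mulmx1 // unitmx_mul PB unitmx_inv.
Qed.
End Conj.

Lemma fricke (C : numClosedFieldType) (s a u : C) : exists x y : 'M[C]_2,
  inSL2 x /\ inSL2 y /\ \tr x = s /\ \tr y = a /\ \tr (x *m y) = u.
Proof.
set d := sqrtC (u ^+ 2 - 4).
have hd : d ^+ 2 = u ^+ 2 - 4 by rewrite sqrtCK.
set q := (d - u) / 2.
have two : (2 : C) != 0 by rewrite pnatr_eq0.
have hq : q ^+ 2 + u * q + 1 = 0.
  have -> : q ^+ 2 + u * q + 1 = (d ^+ 2 - (u ^+ 2 - 4)) / 4 by rewrite /q; field.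
  by rewrite hd subrr mul0r.
have qnz : q != 0.
  by apply/eqP => q0; move: hq; rewrite q0 expr0n /= mulr0 !add0r => /eqP; rewrite oner_eq0.
exists (mk2 s 1 (-1) 0), (mk2 0 q (- q^-1) a).
rewrite /inSL2 !det2E !tr2E !mul2E !mk2E; split; first by rewrite mulr0 mulrN1 opprK add0r.
split; first by rewrite mul0r mulrN mulfV // opprK add0r.
split; first by rewrite addr0.
split; first by rewrite add0r.
apply/eqP; rewrite -subr_eq0.
have -> : s * 0 + 1 * - q^-1 + (-1 * q + 0 * a) - u = - (q ^+ 2 + u * q + 1) / q by field.
by rewrite hq oppr0 mul0r.
Qed.

Lemma notin_ex (C : numDomainType) (s : seq C) : exists q : C, q \notin s.
Proof.
have [r [r0 hr]] : exists r : C, 0 <= r /\ forall x, x \in s -> `|x| < r.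
  elim: s => [|x s [r [r0 hr]]]; first by exists 0.
  exists (r + `|x| + 1); split; first by rewrite !addr_ge0.
  have h1 : 0 < r + 1 by rewrite ltr_wpDl.
  have h2 : `|x| < r + `|x| + 1 by rewrite -addrA [`|x| + 1]addrC addrA -subr_gt0 addrK.
  move=> y; rewrite in_cons => /orP[/eqP->//|/hr hy].
  by apply: (lt_le_trans hy); rewrite -addrA lerDl addr_ge0.
by exists r; apply/negP => /hr; rewrite ger0_norm // ltxx.
Qed.

Lemma scalar_pm (C : fieldType) (A : 'M[C]_2) : inSL2 A ->
  ~ (A 0 1 != 0 \/ A 1 0 != 0 \/ A 0 0 != A 1 1) ->
  exists l : C, (l = 1 \/ l = -1) /\ A = l%:M.
Proof.
rewrite /inSL2 det2E => hd ns.
have h01 : A 0 1 = 0 by apply/eqP; apply/negPn/negP => H; apply: ns; left.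
have h10 : A 1 0 = 0 by apply/eqP; apply/negPn/negP => H; apply: ns; right; left.
have h00 : A 0 0 = A 1 1 by apply/eqP; apply/negPn/negP => H; apply: ns; right; right.
exists (A 0 0); split.
  move: hd; rewrite h01 mul0r subr0 -h00 -expr2 => /eqP; rewrite sqrf_eq1.
  by case/orP => /eqP ->; [left|right].
by apply: eq2; rewrite !mxE ?h01 ?h10 ?h00.
Qed.

Section Main.
Variable C : numClosedFieldType.
Variables (w : word) (P Q : {poly {poly {poly C}}}) (a : C) (T : seq (C * C)).
Hypothesis hPQ : trace_polys w P Q.
Hypothesis hT : forall p, p \notin T -> exists s u, (eval3 P s a u, eval3 Q s a u) = p.

Lemma reach n : exists Tn : seq (C * C), forall t q, (t, q) \notin Tn ->
  exists x y : 'M[C]_2, [/\ inSL2 x, inSL2 y, \tr y = a,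
    \tr (word_eval (iter_word w n) x y) = t &
    \tr (word_eval (iter_word w n) x y *m y) = q].
Proof.
elim: n => [|n [Tn IH]].
  exists [::] => t q _.
  have [x [y [hx [hy [htx [hty htxy]]]]]] := fricke t a q.
  by exists x, y; split.
exists (T ++ map (fun p => (eval3 P p.1 a p.2, eval3 Q p.1 a p.2)) Tn) => t q.
rewrite mem_cat negb_or => /andP[nT nM].
have [s [u E]] := hT nT.
have nsu : (s, u) \notin Tn.
  apply/negP => H; move/negP: nM; apply.
  by rewrite -E; apply: (map_f (fun p => (eval3 P p.1 a p.2, eval3 Q p.1 a p.2)) H).
have [x [y [hx hy hya hs hu]]] := IH _ _ nsu.
exists x, y; split => //.
- rewrite [iter_word w n.+1]/iter_word iterS -/(iter_word w n) subst_eval.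
  have [-> _] := hPQ (eval_SL2 (iter_word w n) hx hy) hy.
  by rewrite hs hya hu; case: E.
- rewrite [iter_word w n.+1]/iter_word iterS -/(iter_word w n) subst_eval.
  have [_ ->] := hPQ (eval_SL2 (iter_word w n) hx hy) hy.
  by rewrite hs hya hu; case: E.
Qed.

Lemma almost_surj n (g : 'M[C]_2) : inSL2 g -> g <> - 1%:M ->
  exists x y : 'M[C]_2, inSL2 x /\ inSL2 y /\ word_eval (iter_word w n) x y = g.
Proof.
move=> hg hng.
have [->|hg1] := eqVneq g 1%:M.
  by exists 1%:M, 1%:M; rewrite /inSL2 det1 eval_one.
have [Tn HTn] := reach n.
have [q hq] := notin_ex (map snd Tn ++ [:: a; -a]).
move: hq; rewrite mem_cat negb_or !in_cons in_nil orbF negb_or => /andP[nq /andP[qa qna]].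
have nTn : (\tr g, q) \notin Tn.
  apply/negP => H; move/negP: nq; apply.
  by apply: (map_f snd H).
have [x [y [hx hy hya htr htq]]] := HTn _ _ nTn.
set v := word_eval (iter_word w n) x y in htr htq *.
have hv : inSL2 v by apply: eval_SL2.
have nsg : nonscalar g.
  rewrite /nonscalar; apply: Classical_Prop.NNPP => H.
  have [l [[->|->] E]] := scalar_pm hg H.
  - by move/eqP: hg1; rewrite E.
  - by apply: hng; rewrite E raddfN.
have nsv : nonscalar v.
  rewrite /nonscalar; apply: Classical_Prop.NNPP => H.
  have [l [hl E]] := scalar_pm hv H.
  move: htq; rewrite E mul_scalar_mx mxtraceZ hya => hq.
  by case: hl => hl; move: hl hq => ->; rewrite ?mul1r ?mulN1r => hq;
     [move/eqP: qa | move/eqP: qna]; rewrite hq.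
have [h [hu hE]] := conj_exists nsv nsg htr (etrans hv (esym hg)).
exists (h *m x *m invmx h), (h *m y *m invmx h).
split; first by rewrite /inSL2 !det_mulmx det_inv mulrC mulrA mulVf ?mul1r // -unitfE -unitmxE.
split; first by rewrite /inSL2 !det_mulmx det_inv mulrC mulrA mulVf ?mul1r // -unitfE -unitmxE.
by rewrite eval_conj.
Qed.
End Main.

Theorem corollary8p3 (R : realType) (w : word) :
  @trace_map_big R[i] w ->
  forall n : nat, (1 <= n)%N ->
  forall g : 'M[R[i]]_2, inSL2 g -> g <> - 1%:M ->
  exists x y : 'M[R[i]]_2,
    inSL2 x /\ inSL2 y /\ word_eval (iter_word w n) x y = g.
Proof.
move=> [P [Q [hPQ [a [T hT]]]]] n _ g hg hng.
apply: (@almost_surj _ w P Q a T hPQ) => // p hp.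
exact: ((hT p).2 hp).
Qed.
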